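(* Let $T \geq 1$, let $\mathbf{u}$ be an input, and let $h_1, \dots, h_T$ be deterministic functions, where $h_t$ takes as arguments $\mathbf{u}$ and states $\mathbf{s}_1, \dots, \mathbf{s}_{t-1}$ and returns a state (states lie in normed vector spaces). Let $\mathbf{s}^*_1, \dots, \mathbf{s}^*_T$ be the values produced by feedforward computation, i.e. $\mathbf{s}^*_t = h_t(\mathbf{u}, \mathbf{s}^*_{1:t-1})$ for $t = 1, \dots, T$ (equivalently, the unique solution of the triangular system $h_t(\mathbf{u}, \mathbf{s}_{1:t-1}) - \mathbf{s}_t = 0$, $t=1,\dots,T$). Consider the nonlinear Jacobi iteration with tolerance $\epsilon \ge 0$: initialize arbitrary $\mathbf{s}^0_1, \dots, \mathbf{s}^0_T$ and set $k \gets 0$; repeat { $k \gets k+1$; for all $t = 1, \dots, T$ (in parallel) set $\mathbf{s}^k_t \gets h_t(\mathbf{u}, \mathbf{s}^{k-1}_{1:t-1})$ } until $k = T$ or $\|\mathbf{s}^k_{1:T} - \mathbf{s}^{k-1}_{1:T}\| < \epsilon$; return $\mathbf{s}^k_1, \dots, \mathbf{s}^k_T$. If $\epsilon = 0$, then for any initialization $\mathbf{s}^0_{1:T}$ this algorithm converges and returns $\mathbf{s}^*_1, \dots, \mathbf{s}^*_T$ (the same result as feedforward computation) in at most $T$ parallel iterations.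
   Context: Notation: $\mathbf{s}_{a:b}$ denotes $\mathbf{s}_a, \mathbf{s}_{a+1}, \dots, \mathbf{s}_b$ (empty if $b < a$), so $h_1$ depends only on $\mathbf{u}$. A ''parallel iteration'' is one pass of the repeat loop, in which all $T$ updates are computed from the previous iterate $\mathbf{s}^{k-1}_{1:T}$. $\|\cdot\|$ is a norm on the collection of all states. *)

(* Defs.v *)
From HB Require Import structures.
From mathcomp Require Import all_boot all_order all_algebra.
From mathcomp Require Import all_classical all_reals all_analysis.
Set Implicit Arguments. Unset Strict Implicit. Unset Printing Implicit Defensive.
Import Order.TTheory GRing.Theory Num.Theory.
Import numFieldNormedType.Exports.
Local Open Scope ring_scope.

(* States: state t lives in the normed vector space V t, for t : 'I_T
   (index t corresponds to s_{t+1} of the paper).  A collection of all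
   states is a dependent function  forall t, V t. *)
Definition states (R : realType) (T : nat) (V : 'I_T -> normedModType R) :=
  forall t : 'I_T, V t.

Definition states_sub (R : realType) (T : nat) (V : 'I_T -> normedModType R)
  (s s' : states V) : states V := fun t => s t - s' t.

Definition states_scale (R : realType) (T : nat) (V : 'I_T -> normedModType R)
  (a : R) (s : states V) : states V := fun t => a *: s t.

Definition states_add (R : realType) (T : nat) (V : 'I_T -> normedModType R)
  (s s' : states V) : states V := fun t => s t + s' t.

Definition is_states_norm (R : realType) (T : nat) (V : 'I_T -> normedModType R)
  (nrm : states V -> R) : Prop :=
  [/\ (forall s, 0 <= nrm s),
      (forall s, nrm s = 0 -> s = (fun t => 0 : V t)),
      (forall s s', nrm (states_add s s') <= nrm s + nrm s') &
      (forall a s, nrm (states_scale a s) = `|a| * nrm s)].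

(* h t u s is h_{t+1}(u, s_{1:t}) ; causality: it only depends on the
   states with index < t. *)
Definition causal (R : realType) (T : nat) (V : 'I_T -> normedModType R)
  (U : Type) (h : forall t : 'I_T, U -> states V -> V t) : Prop :=
  forall (t : 'I_T) (u : U) (s s' : states V),
    (forall j : 'I_T, (j < t)%N -> s j = s' j) -> h t u s = h t u s'.

(* Feedforward (sequential) computation: for t = 1..T in order,
   s_t <- h_t(u, s_{1:t-1}); the entries of the initial buffer sinit are
   all overwritten before being read. *)
Definition feedforward (R : realType) (T : nat) (V : 'I_T -> normedModType R)
  (U : Type) (h : forall t : 'I_T, U -> states V -> V t) (u : U)
  (sinit : states V) : states V :=
  foldl (fun (s : states V) (t : 'I_T) => @dfwith _ (fun j : 'I_T => (V j : Type)) s t (h t u s)) sinit (enum 'I_T).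

Definition jacobi_step (R : realType) (T : nat) (V : 'I_T -> normedModType R)
  (U : Type) (h : forall t : 'I_T, U -> states V -> V t) (u : U)
  (s : states V) : states V := fun t => h t u s.

(* The repeat loop: k is the number of iterations done so far, sprev the
   current iterate s^k; fuel only guarantees termination (the loop always
   stops at k = T when started with fuel T and k = 0). *)
Fixpoint jacobi_loop (R : realType) (T : nat) (V : 'I_T -> normedModType R)
  (U : Type) (h : forall t : 'I_T, U -> states V -> V t) (u : U)
  (nrm : states V -> R) (eps : R) (fuel k : nat) (sprev : states V)
  : nat * states V :=
  let snew := jacobi_step h u sprev in
  match fuel with
  | 0 => (k.+1, snew)
  | fuel'.+1 =>
      if (k.+1 == T) || (nrm (states_sub snew sprev) < eps)
      then (k.+1, snew)
      else jacobi_loop h u nrm eps fuel' k.+1 snew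
  end.

Definition jacobi (R : realType) (T : nat) (V : 'I_T -> normedModType R)
  (U : Type) (h : forall t : 'I_T, U -> states V -> V t) (u : U)
  (nrm : states V -> R) (eps : R) (s0 : states V) : nat * states V :=
  jacobi_loop h u nrm eps T 0 s0.

(* Main.v *)
Require Import Defs.
From HB Require Import structures.
From mathcomp Require Import all_boot all_order all_algebra.
From mathcomp Require Import all_classical all_reals all_analysis.
Import Order.TTheory GRing.Theory Num.Theory.
Local Open Scope ring_scope.

Section Aux.
Variables (R : realType) (T : nat) (V : 'I_T -> normedModType R)
  (U : Type) (h : forall t : 'I_T, U -> states V -> V t) (u : U).
Hypothesis hc : causal h.

Lemma fold_inv (l : seq 'I_T) (s : states V) (m : nat) :
  map val l = iota m (size l) ->
  (forall j : 'I_T, (j < m)%N -> s j = h j u s) ->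
  forall j : 'I_T, (j < m + size l)%N ->
  foldl (fun (s : states V) (t : 'I_T) => @dfwith _ (fun j : 'I_T => (V j : Type)) s t (h t u s)) s l j
  = h j u (foldl (fun (s : states V) (t : 'I_T) => @dfwith _ (fun j : 'I_T => (V j : Type)) s t (h t u s)) s l).
Proof.
elim: l s m => [|t l IH] s m /=.
  by move=> _ Hs j; rewrite addn0; apply: Hs.
case=> Ht Hl Hs j Hj.
rewrite -addSnnS in Hj.
apply: (IH _ m.+1 Hl) => // i Hi.
set s' := dfwith _ _ _.
have Hagree : forall i' : 'I_T, (i' < t)%N -> s' i' = s i'.
  move=> i' Hi'; rewrite /s'; move: Hi'; case: dfwithP => //; by rewrite ltnn.
have Hin : s' t = h t u s.
  exact: dfwith_in.
have Hout : forall i0, t != i0 -> s' i0 = s i0.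
  by move=> i0 Hne; exact: dfwith_out.
case: (eqVneq t i) => [<-|Hne].
  rewrite Hin; apply: hc => i' Hi'; by rewrite Hagree.
rewrite Hout //.
have Him : (i < m)%N.
  move: Hi; rewrite ltnS leq_eqVlt => /orP [/eqP E|//].
  by case/eqP: Hne; apply: val_inj; rewrite /= Ht E.
rewrite Hs //; apply: hc => i' Hi'; rewrite Hagree //.
by rewrite Ht; apply: ltn_trans Hi' Him.
Qed.

Lemma ff_fix (sinit : states V) (j : 'I_T) :
  feedforward h u sinit j = h j u (feedforward h u sinit).
Proof.
rewrite /feedforward; apply: (@fold_inv (enum 'I_T) sinit 0) => //.
  by rewrite val_enum_ord size_enum_ord.
by rewrite add0n size_enum_ord.
Qed.

Lemma iter_agree (sinit s : states V) k (j : 'I_T) :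
  (j < k)%N -> iter k (jacobi_step h u) s j = feedforward h u sinit j.
Proof.
elim: k j => [//|k IH] j Hj.
rewrite iterS /jacobi_step ff_fix; apply: hc => i Hi.
by apply: IH; apply: leq_trans Hi _.
Qed.

Lemma loop_eq (nrm : states V -> R) (eps : R) (Hn : forall s, 0 <= nrm s)
  (He : eps = 0) f k s :
  (k < T)%N -> (T <= k + f + 1)%N ->
  jacobi_loop h u nrm eps f k s = (T, iter (T - k) (jacobi_step h u) s).
Proof.
subst eps; elim: f k s => [|f IH] k s Hk Hf /=.
  have E : T = k.+1 by apply/eqP; rewrite eqn_leq Hk andbT; rewrite addn0 addn1 in Hf.
  have -> : (T - k = 1)%N by rewrite E subSnn.
  by rewrite -E.
case: eqP => [E|NE] /=.
  have -> : (T - k = 1)%N by rewrite -E subSnn.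
  by rewrite E.
rewrite ltNge Hn /=.
have Hk' : (k.+1 < T)%N by rewrite ltn_neqAle Hk andbT; apply/eqP.
rewrite IH //; last by rewrite addSn -addnS.
congr pair; have -> : (T - k = (T - k.+1).+1)%N by rewrite subnS prednK // subn_gt0.
by rewrite iterSr.
Qed.

End Aux.

Theorem proposition1 (R : realType) (T : nat) (V : 'I_T -> normedModType R)
  (U : Type) (h : forall t : 'I_T, U -> states V -> V t) (u : U)
  (nrm : states V -> R) (eps : R) (s0 : states V) :
  (1 <= T)%N -> causal h -> is_states_norm nrm -> eps = 0 ->
  ((jacobi h u nrm eps s0).1 <= T)%N /\
  (forall sinit : states V, (jacobi h u nrm eps s0).2 = feedforward h u sinit).
Proof.
move=> HT hc [Hn _ _ _] He.
have L := @loop_eq _ _ _ _ h u nrm eps Hn He T 0 s0 HT.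
rewrite add0n addn1 in L.
have {}L := L (leqnSn T).
rewrite /jacobi L subn0.
split; first exact: leqnn.
move=> sinit /=.
apply: functional_extensionality_dep => j.
have K := @iter_agree _ _ _ _ h u hc sinit s0 T j (ltn_ord j).
exact: K.
Qed.
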